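(* Let $X$ be a $0$-dimensional space. Then the group $CHom(C_p(X,\mathbb Z),\mathbb Z)$ of continuous homomorphisms $C_p(X,\mathbb Z)\to\mathbb Z$ is isomorphic to the free abelian group $A(X)$: every continuous homomorphism $\phi:C_p(X,\mathbb Z)\to\mathbb Z$ has the form $\phi(f)=\sum_{x\in F}n_xf(x)$ for a finite set $F\subseteq X$ and integers $n_x$, and the map sending $\phi$ to $\sum_{x\in F}n_x x\in A(X)$ is a group isomorphism.
   Context: Spaces are Tikhonov; $0$-dimensional means having a base of clopen sets. $C_p(X,\mathbb Z)$ is the group of continuous functions $X\to\mathbb Z$ ($\mathbb Z$ discrete) with the topology of pointwise convergence; $\mathbb Z$ is discrete. $A(X)$ is the free abelian group on the set $X$. *)

(* Defs.v *)
From HB Require Import structures.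
From mathcomp Require Import all_boot all_order all_algebra.
From mathcomp Require Import all_classical all_reals all_analysis.
From mathcomp Require Import freeg.

Set Implicit Arguments.
Unset Strict Implicit.
Unset Printing Implicit Defensive.

Import Order.TTheory GRing.Theory Num.Theory.
Local Open Scope classical_set_scope.
Local Open Scope ring_scope.

Definition Zd : Type := discrete_topology int.

(* C_p(X, Z): functions X -> Z with the topology of pointwise convergence;
   the carrier of C_p(X,Z) is the subspace of continuous functions. *)
Definition ptwsZ (X : topologicalType) := {ptws X -> Zd}.

Definition Cfun (X : topologicalType) : set (ptwsZ X) :=
  [set f | continuous (f : X -> Zd)].

Arguments Cfun : clear implicits.

Definition tychonoff_space (X : topologicalType) :=
  hausdorff_space X /\ completely_regular_space X.

Definition clopen_base (X : topologicalType) :=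
  forall (x : X) (U : set X), nbhs x U ->
    exists V : set X, [/\ clopen V, V x & V `<=` U].

(* phi : C_p(X,Z) -> Z is a continuous group homomorphism (only its
   values on continuous functions matter). *)
Definition CHom (X : topologicalType) (phi : ptwsZ X -> Zd) :=
  (forall f g : ptwsZ X, Cfun X f -> Cfun X g ->
     (phi ((fun x => (f x : int) + (g x : int)) : ptwsZ X) : int)
       = (phi f : int) + (phi g : int))
  /\ {within Cfun X, continuous phi}.

Definition AX (X : topologicalType) := {freeg X / int}.

Definition pairing (X : topologicalType) (a : AX X) (f : ptwsZ X) : int :=
  \sum_(x <- dom a) coeff x a * (f x : int).

(* Main.v *)
Require Import Defs.
From HB Require Import structures.
From mathcomp Require Import all_boot all_order all_algebra.
From mathcomp Require Import all_classical all_reals all_analysis.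
From mathcomp Require Import freeg.
From mathcomp Require Import finmap.
Import Order.TTheory GRing.Theory Num.Theory.
Local Open Scope classical_set_scope.
Local Open Scope ring_scope.

Definition addZ {T : topologicalType} (f g : ptwsZ T) : ptwsZ T :=
  fun x => (f x : int) + (g x : int).

Lemma nbhs_agree1 {T : topologicalType} (w : T) (f0 : ptwsZ T) :
  nbhs f0 [set g : ptwsZ T | g w = f0 w].
Proof.
exists [set g : ptwsZ T | g w = f0 w]; split => //.
exists [set [set g : ptwsZ T | g w = f0 w]]; last by rewrite bigcup_set1.
move=> M ->; exists [fset [set g : ptwsZ T | g w = f0 w]]%fset.
  move=> N; rewrite inE => /eqP ->; apply/mem_set; exists w => //.
  by exists [set f0 w] => //; exact: (@discrete_open Zd).
by rewrite set_fset1 bigcap_set1.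
Qed.

Lemma nbhs_agree {T : topologicalType} (F : seq T) (f0 : ptwsZ T) :
  nbhs f0 [set g : ptwsZ T | forall x, x \in F -> g x = f0 x].
Proof.
elim: F => [|w F IH].
  by apply: (filterS _ filterT) => g _ x.
have H := filterI (nbhs_agree1 w f0) IH.
have FF : Filter (nbhs f0) := @nbhs_filter {ptws T -> Zd} f0.
apply: (filterS _ (H FF)) => g [/= gw gF] x.
by rewrite inE => /orP[/eqP ->|/gF].
Qed.

Lemma Cfun_loc {T : topologicalType} (f : ptwsZ T) :
  (forall x, nbhs x [set y | f y = f x]) -> Cfun T f.
Proof. by move=> H x; apply/discrete_cvg; exact: H. Qed.

Lemma Cfun_locP {T : topologicalType} (f : ptwsZ T) :
  Cfun T f -> forall x, nbhs x [set y | f y = f x].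
Proof. by move=> H x; have /discrete_cvg := H x. Qed.

Lemma Cfun_add {T : topologicalType} (f g : ptwsZ T) :
  Cfun T f -> Cfun T g -> Cfun T (addZ f g).
Proof.
move=> /Cfun_locP Hf /Cfun_locP Hg; apply: Cfun_loc => x.
by apply: filterS (filterI (Hf x) (Hg x)) => y [/= fy gy]; rewrite /addZ fy gy.
Qed.

Lemma Cfun_map {T : topologicalType} (f : ptwsZ T) (h : int -> int) :
  Cfun T f -> Cfun T ((fun x => h (f x : int)) : ptwsZ T).
Proof.
move=> /Cfun_locP Hf; apply: Cfun_loc => x.
by apply: filterS (Hf x) => y /= ->.
Qed.

Lemma Cfun_const {T : topologicalType} (c : int) :
  Cfun T ((fun _ => c) : ptwsZ T).
Proof. by apply: Cfun_loc => x; apply: (filterS _ filterT). Qed.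

Lemma Cfun_sum {T : topologicalType} (I : Type) (s : seq I) (h : I -> ptwsZ T) :
  (forall i, Cfun T (h i)) ->
  Cfun T ((fun y => \sum_(i <- s) (h i y : int)) : ptwsZ T).
Proof.
move=> Hh; elim: s => [|i s IH].
  have -> : ((fun y => \sum_(i <- [::]) (h i y : int)) : ptwsZ T) = (fun _ => 0)
    by apply/funext => y; rewrite big_nil.
  exact: Cfun_const.
have -> : ((fun y => \sum_(j <- i :: s) (h j y : int)) : ptwsZ T) =
   addZ (h i) (fun y => \sum_(j <- s) (h j y : int))
  by apply/funext => y; rewrite big_cons.
exact: Cfun_add.
Qed.

Lemma pairing_sub {T : topologicalType} (a : AX T) (f : ptwsZ T) (s : seq T) :
  uniq s -> {subset dom a <= s} ->
  \sum_(x <- s) coeff x a * (f x : int) = pairing a f.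
Proof.
move=> us sub; rewrite /pairing (bigID (fun x => x \in dom a)) /=.
rewrite [X in _ + X]big1 ?addr0; last first.
  by move=> x /coeff_outdom ->; rewrite mul0r.
rewrite -big_filter; apply: perm_big; apply: uniq_perm.
- exact: filter_uniq.
- exact: uniq_dom.
- move=> x; rewrite mem_filter; case: (boolP (x \in dom a)) => //= xa.
  by rewrite (sub _ xa).
Qed.

Lemma ptws_nbhs_fin {X : topologicalType} (f0 : ptwsZ X) (U : set (ptwsZ X)) :
  nbhs f0 U -> exists F : seq X, forall g : ptwsZ X,
    (forall x, x \in F -> g x = f0 x) -> U g.
Proof.
move=> [P [[Q QfinP <-] [V JV Vpz]] VU].
have [L Lsub VL] := QfinP _ JV.
suff [F HF] : exists F : seq X, forall g : ptwsZ X,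
    (forall x, x \in F -> g x = f0 x) -> V g.
  by exists F => g /HF Vg; apply: VU; exists V.
move: Vpz; rewrite -VL /= => Vpz.
have step : forall M : set (ptwsZ X), M \in L -> exists w : X, forall g h : ptwsZ X, g w = h w -> M g -> M h.
  move=> M /Lsub /set_mem [w _ [N oN <-]].
  by exists w => g h /= ->.
suff : forall s : seq _, {subset s <= L} -> exists F : seq X, forall g : ptwsZ X,
    (forall x, x \in F -> g x = f0 x) -> forall M, M \in s -> M g.
  move=> /(_ L (fun _ h => h)) [F HF]; exists F => g /HF gM M /= ML; exact: gM.
elim=> [|M s IH] sL; first by exists [::].
have [|F HF] := IH; first by move=> N Ns; apply: sL; rewrite inE Ns orbT.
have [|w Hw] := step M; first by apply: sL; rewrite inE eqxx.
exists (w :: F) => g agr N; rewrite inE => /orP[/eqP ->|Ns].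
  apply: (Hw f0); first by rewrite agr // inE eqxx.
  by apply: Vpz; apply: sL; rewrite inE eqxx.
by apply: HF => // x xF; apply: agr; rewrite inE xF orbT.
Qed.


Lemma sep {T : topologicalType} (hT : hausdorff_space T) (zd : clopen_base T)
  (s : seq T) (x : T) : exists e : ptwsZ T,
  [/\ Cfun T e, (e x : int) = 1 & forall y, y \in s -> y != x -> (e y : int) = 0].
Proof.
set A := [set y | y \in s /\ y != x].
have finA : finite_set A.
  apply: (sub_finite_set _ (finite_seq s)) => y [ys _]; exact: ys.
have cA : closed A by apply: (proj1 (@accessible_finite_set_closed T) (hausdorff_accessible hT)) finA.
have nA : nbhs x (~` A).
  by apply: open_nbhs_nbhs; split; [exact: closed_openC | move=> [_ /eqP]].
have [V [[oV cV] Vx VA]] := zd x _ nA.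
exists ((fun y => if `[< V y >] then 1 else 0) : ptwsZ T); split.
- apply: Cfun_loc => y; case: (pselect (V y)) => Vy.
    apply: (filterS _ (open_nbhs_nbhs (conj oV Vy))) => z Vz /=.
    by rewrite !asboolT.
  apply: (filterS _ (open_nbhs_nbhs (conj (closed_openC cV) Vy))) => z Vz /=.
  by rewrite !asboolF.
- by rewrite /= asboolT.
- move=> y ys yx /=; rewrite asboolF // => /VA; apply; split => //.
Qed.

Lemma phi0 {T : topologicalType} (phi : ptwsZ T -> int)
  (hadd : forall f g : ptwsZ T, Cfun T f -> Cfun T g -> phi (addZ f g) = phi f + phi g) :
  phi (fun _ => 0) = 0.
Proof.
have := hadd _ _ (Cfun_const 0) (Cfun_const 0).
have -> : addZ ((fun _ => 0) : ptwsZ T) (fun _ => 0) = (fun _ => 0).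
  by apply/funext => x; rewrite /addZ addr0.
by move/(congr1 (fun t => t - phi (fun _ => 0))); rewrite addrK subrr.
Qed.

Lemma phiN {T : topologicalType} (phi : ptwsZ T -> int)
  (hadd : forall f g : ptwsZ T, Cfun T f -> Cfun T g -> phi (addZ f g) = phi f + phi g)
  (f : ptwsZ T) : Cfun T f -> phi (fun x => - (f x : int)) = - phi f.
Proof.
move=> cf; have cN := Cfun_map f (fun t : int => - t) cf.
have := hadd _ _ cf cN.
have -> : addZ f (fun x => - (f x : int)) = (fun _ => 0).
  by apply/funext => x; rewrite /addZ subrr.
rewrite (phi0 phi hadd) => /esym /eqP; rewrite addrC addr_eq0.
by move/eqP.
Qed.

Lemma phiM {T : topologicalType} (phi : ptwsZ T -> int)
  (hadd : forall f g : ptwsZ T, Cfun T f -> Cfun T g -> phi (addZ f g) = phi f + phi g)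
  (c : int) (f : ptwsZ T) : Cfun T f -> phi (fun x => c * (f x : int)) = c * phi f.
Proof.
move=> cf.
have pos : forall n : nat, phi (fun x => n%:Z * (f x : int)) = n%:Z * phi f.
  elim=> [|n IH].
    have -> : ((fun x => 0%:Z * (f x : int)) : ptwsZ T) = (fun _ => 0).
      by apply/funext => x; rewrite mul0r.
    by rewrite (phi0 phi hadd) mul0r.
  have -> : ((fun x => n.+1%:Z * (f x : int)) : ptwsZ T) =
      addZ f (fun x => n%:Z * (f x : int)).
    by apply/funext => x; rewrite /addZ -add1n PoszD mulrDl mul1r.
  rewrite hadd //; last exact: (Cfun_map f (fun t : int => n%:Z * t) cf).
  by rewrite IH -add1n PoszD mulrDl mul1r.
case: c => n; first exact: pos.
have -> : ((fun x => Negz n * (f x : int)) : ptwsZ T) =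
    (fun x => - (((fun y => n.+1%:Z * (f y : int)) : ptwsZ T) x : int)).
  by apply/funext => x; rewrite NegzE mulNr.
rewrite (phiN phi hadd) //; last exact: (Cfun_map f (fun t : int => n.+1%:Z * t) cf).
by rewrite pos NegzE mulNr.
Qed.

Lemma phi_sum {T : topologicalType} (phi : ptwsZ T -> int)
  (hadd : forall f g : ptwsZ T, Cfun T f -> Cfun T g -> phi (addZ f g) = phi f + phi g)
  (I : Type) (s : seq I) (h : I -> ptwsZ T) : (forall i, Cfun T (h i)) ->
  phi (fun y => \sum_(i <- s) (h i y : int)) = \sum_(i <- s) phi (h i).
Proof.
move=> Hh; elim: s => [|i s IH].
  have -> : ((fun y => \sum_(i <- [::]) (h i y : int)) : ptwsZ T) = (fun _ => 0)
    by apply/funext => y; rewrite big_nil.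
  by rewrite (phi0 phi hadd) big_nil.
have -> : ((fun y => \sum_(j <- i :: s) (h j y : int)) : ptwsZ T) =
   addZ (h i) (fun y => \sum_(j <- s) (h j y : int))
  by apply/funext => y; rewrite big_cons.
by rewrite hadd ?big_cons ?IH //; exact: Cfun_sum.
Qed.


Lemma part1 (X : topologicalType) (hT : hausdorff_space X) (zdX : clopen_base X)
  (phi : ptwsZ X -> Zd) : CHom phi ->
     exists (F : seq X) (n : X -> int),
       uniq F /\
       forall f, Cfun X f -> (phi f : int) = \sum_(x <- F) n x * (f x : int).
Proof.
move=> [hadd hcont].
have hadd' : forall f g : ptwsZ X, Cfun X f -> Cfun X g ->
   (phi (addZ f g) : int) = (phi f : int) + (phi g : int) := hadd.
have p0 := phi0 phi hadd'.
have /subspace_continuousP Hc := hcont.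
have H1 := (@discrete_cvg Zd _ _ _).1 (Hc _ (Cfun_const 0)).
have H2 := H1 (fmap_filter _ _).
have H3 := H2 (within_filter _ (@nbhs_filter {ptws X -> Zd} (fun _ => 0))).
have [F0 HF0] := @ptws_nbhs_fin X (fun _ => 0) _ H3.
have HF : forall g : ptwsZ X, (forall x, x \in F0 -> (g x : int) = 0) ->
   Cfun X g -> (phi g : int) = 0.
  by move=> g agr cg; rewrite -p0; exact: (HF0 g agr cg).
set F := undup F0.
have agreeF : forall f g : ptwsZ X, Cfun X f -> Cfun X g ->
    (forall x, x \in F -> (f x : int) = g x) -> (phi f : int) = phi g.
  move=> f g cf cg agr.
  have ch : Cfun X (addZ f (fun x => - (g x : int))).
    by apply: Cfun_add => //; exact: (Cfun_map g (fun t : int => - t)).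
  have -> : f = addZ g (addZ f (fun x => - (g x : int))).
    by apply/funext => x; rewrite /addZ addrC subrK.
  rewrite hadd' // (HF _ _ ch) ?addr0 // => x xF0.
  by rewrite /addZ agr ?subrr // mem_undup.
have [e He] : exists e : X -> ptwsZ X, forall x, [/\ Cfun X (e x), (e x x : int) = 1 &
    forall y, y \in F -> y != x -> (e x y : int) = 0].
  have [e0 He0] := @choice X (ptwsZ X) _ (fun x => sep hT zdX F x).
  exists e0 => x; have [? ? ?] := He0 x; split => //.
exists F, (fun x => (phi (e x) : int)); split; first exact: undup_uniq.
move=> f cf.
pose h := fun x => ((fun y => (f x : int) * (e x y : int)) : ptwsZ X).
have ch : forall x, Cfun X (h x).
  by move=> x; have [cex _ _] := He x; exact: (Cfun_map (e x) (fun t : int => (f x : int) * t)).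
have agr : forall y, y \in F -> (f y : int) = \sum_(x <- F) (h x y : int).
  move=> y yF; rewrite (bigD1_seq y) //= ?undup_uniq //.
  have [_ Hy _] := He y; rewrite /h /= Hy mulr1 big1_seq ?addr0 // => x /andP[xy xF].
  by have [_ _ ->] := He x; rewrite ?mulr0 // eq_sym.
rewrite (agreeF f _ cf (@Cfun_sum X X F h ch) agr).
rewrite (phi_sum phi hadd') //; apply: eq_bigr => x _.
have [cex _ _] := He x.
by rewrite /h (phiM phi hadd') // mulrC.
Qed.


Lemma pairing_e {T : topologicalType} (a : AX T) (s : seq T) (x : T) (e : ptwsZ T) :
  uniq s -> {subset dom a <= s} -> x \in s -> (e x : int) = 1 ->
  (forall y, y \in s -> y != x -> (e y : int) = 0) -> pairing a e = coeff x a.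
Proof.
move=> us sub xs ex ey.
rewrite -(pairing_sub a e s us sub) (bigD1_seq x xs us) /= ex mulr1.
by rewrite big1_seq ?addr0 // => y /andP[yx ys]; rewrite ey ?mulr0.
Qed.

Lemma pairing_add {T : topologicalType} (a b : AX T) (f : ptwsZ T) :
  pairing (a + b) f = pairing a f + pairing b f.
Proof.
set s := undup (dom a ++ dom b ++ dom (a + b)).
have us : uniq s by exact: undup_uniq.
rewrite -(pairing_sub a f s us); last by move=> x xa; rewrite mem_undup !mem_cat xa.
rewrite -(pairing_sub b f s us); last by move=> x xa; rewrite mem_undup !mem_cat xa orbT.
rewrite -(pairing_sub (a + b) f s us); last by move=> x xa; rewrite mem_undup !mem_cat xa !orbT.
by rewrite -big_split; apply: eq_bigr => x _; rewrite coeffD mulrDl.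
Qed.

Lemma pairing_agree {T : topologicalType} (a : AX T) (f g : ptwsZ T) :
  (forall x, x \in dom a -> g x = f x) -> pairing a g = pairing a f.
Proof. by move=> agr; apply: eq_big_seq => x xa; rewrite agr. Qed.

Lemma pairing_CHom {T : topologicalType} (a : AX T) :
  CHom (fun f => (pairing a f : Zd)).
Proof.
split.
  by move=> f g _ _; rewrite /pairing -big_split; apply: eq_bigr => x _; rewrite mulrDr.
apply/subspace_continuousP => f cf.
apply/(@discrete_cvg Zd _ _ _).
apply: (filterS _ (@nbhs_agree T (dom a) f)) => g agr _.
exact: pairing_agree.
Qed.

Theorem lemma5p2 (X : topologicalType) (tychX : tychonoff_space X)
    (zdX : clopen_base X) :
  (* every continuous homomorphism has the form f |-> sum_{x in F} n_x f(x) *)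
  (forall phi : ptwsZ X -> Zd, CHom phi ->
     exists (F : seq X) (n : X -> int),
       uniq F /\
       forall f, Cfun X f -> (phi f : int) = \sum_(x <- F) n x * (f x : int))
  /\
  (* the map A(X) -> CHom(C_p(X,Z),Z), a |-> pairing a, is well defined,
     additive, and bijective (hence phi |-> sum n_x x is an isomorphism) *)
  (forall a : AX X, CHom (fun f => (pairing a f : Zd)))
  /\ (forall (a b : AX X) f, pairing (a + b) f = pairing a f + pairing b f)
  /\ (forall phi : ptwsZ X -> Zd, CHom phi ->
        exists! a : AX X, forall f, Cfun X f -> (phi f : int) = pairing a f).
Proof.
have hT := tychX.1.
split; first exact: (part1 X hT zdX).
split; first exact: pairing_CHom.
split; first exact: pairing_add.
move=> phi cphi.
have [F [n [uF HF]]] := part1 X hT zdX phi cphi.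
set a : AX X := \sum_(x <- F) << n x *g x >>.
have ca : forall y, coeff y a = if y \in F then n y else 0.
  move=> y; rewrite /a raddf_sum.
  rewrite (eq_bigr (fun i => n i * (i == y)%:R)); last by move=> i _; exact: coeffU.
  case: ifP => yF.
    rewrite (bigD1_seq y) //= eqxx mulr1 big1_seq ?addr0 // => x /andP[xy _].
    by rewrite (negbTE xy) mulr0.
  rewrite big1_seq // => x /andP[_ xF]; case: eqP => [xy|_]; last by rewrite mulr0.
  by rewrite -xy xF in yF.
have subF : {subset dom a <= F}.
  by move=> y; rewrite mem_dom ca; case: ifP => // _; rewrite eqxx.
have Ha : forall f, Cfun X f -> (phi f : int) = pairing a f.
  move=> f cf; rewrite HF // -(pairing_sub a f F uF subF).
  by apply: eq_big_seq => x xF; rewrite ca xF.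
exists a; split => // b Hb.
have Hab : forall f, Cfun X f -> pairing a f = pairing b f.
  by move=> f cf; rewrite -Ha // Hb.
apply/eqP/freeg_eqP => x.
set s := undup (dom a ++ dom b).
have us : uniq s by exact: undup_uniq.
have sa : {subset dom a <= s} by move=> y ya; rewrite mem_undup mem_cat ya.
have sb : {subset dom b <= s} by move=> y yb; rewrite mem_undup mem_cat yb orbT.
case: (boolP (x \in s)) => xs.
  have [e [ce ex ey]] := sep hT zdX s x.
  by rewrite -(pairing_e a s x e us sa xs ex ey) Hab // (pairing_e b s x e us sb xs ex ey).
rewrite !coeff_outdom //; apply: contra xs; [exact: sb | exact: sa].
Qed.
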